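(* Let $a,b,d\in\mathbb{C}$ with $a\neq b$. For every integer $n\ge 1$, $$\int_a^b S_n(u;a,b,d)\,du=2^n(b-a)^{n+1}B_n\!\left(\frac12+\frac{d}{b-a}\right),$$ where the integral is along any piecewise smooth path from $a$ to $b$ (the integrand being a polynomial) and $$S_n(u;a,b,d)=\sum_{k=0}^{n}\binom{n}{k}(2d)^k\,Q_{n-k}(u;a,b).$$ In particular (case $d=0$), $\int_a^b Q_n(u;a,b)\,du=2^nB_n(\tfrac12)(b-a)^{n+1}$.
   Context: The MacMahon numbers $M_{n,k}$ ($n\ge1$, $1\le k\le n$) are defined by $M_{n,1}=1$ for all $n\ge1$ and, for $n\ge 2$, $2\le k\le n$, $M_{n,k}=(2k-1)M_{n-1,k}+(2n-2k+1)M_{n-1,k-1}$, with the convention $M_{n-1,n}=0$. For $a,b\in\mathbb{C}$ the derivative polynomial is $Q_n(u;a,b)=\sum_{k=1}^{n+1}M_{n+1,k}(u-a)^{n+1-k}(u-b)^{k-1}$ ($n\ge 0$). The Bernoulli polynomials $B_n(w)$ are defined by $\sum_{n\ge0}B_n(w)\frac{t^n}{n!}=\frac{t e^{wt}}{e^t-1}$. *)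

(* Defs.v *)
From HB Require Import structures.
From mathcomp Require Import all_boot all_order all_algebra.
Set Implicit Arguments. Unset Strict Implicit. Unset Printing Implicit Defensive.
Import Order.TTheory GRing.Theory Num.Theory.
Local Open Scope ring_scope.

Fixpoint macmahon (n k : nat) {struct n} : nat :=
  match n with
  | 0 => 0
  | 1 => if k == 1 then 1 else 0
  | n'.+1 =>
      match k with
      | 0 => 0
      | 1 => 1
      | k'.+1 =>
          if (k <= n)%N then
            ((2 * k - 1) * macmahon n' k + (2 * n - 2 * k + 1) * macmahon n' k')%N
          else 0
      end
  end.

Definition Qpoly (R : nzRingType) (a b : R) (n : nat) : {poly R} :=
  \sum_(1 <= k < n.+2)
     (macmahon n.+1 k)%:R *: (('X - a%:P) ^+ (n.+1 - k) * ('X - b%:P) ^+ (k - 1)).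

Definition Spoly (R : nzRingType) (a b d : R) (n : nat) : {poly R} :=
  \sum_(k < n.+1) ('C(n, k)%:R * (2 * d) ^+ k) *: Qpoly a b (n - k).

Definition prim (R : fieldType) (p : {poly R}) : {poly R} :=
  \poly_(i < (size p).+1) (if i is j.+1 then p`_j / (j.+1)%:R else 0).

(* Path integral from a to b of a polynomial (independent of the path):
   the difference of the antiderivative at the endpoints. *)
Definition poly_integral (R : fieldType) (p : {poly R}) (a b : R) : R :=
  (prim p).[b] - (prim p).[a].

(* Bernoulli polynomials B_n(w), defined by the coefficient identities of
   (e^t - 1) * sum_n B_n(w) t^n/n! = t e^{wt}, i.e. for all n,
   sum_{k<=n} C(n+1,k) B_k(w) = (n+1) w^n, solved for B_n(w). *)
Fixpoint bern_seq (R : fieldType) (w : R) (n : nat) : seq R :=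
  match n with
  | 0 => [:: 1]
  | n'.+1 =>
      let s := bern_seq w n' in
      rcons s (w ^+ n - \sum_(k < n) ('C(n.+1, k)%:R / (n.+1)%:R) * s`_k)
  end.

Definition bernoulli_poly (R : fieldType) (n : nat) (w : R) : R :=
  (bern_seq w n)`_n.

(* Main.v *)
Set Warnings "-all".
Require Import Defs.
From HB Require Import structures.
From mathcomp Require Import all_boot all_order all_algebra.
From mathcomp Require Import zify ring lra.
Import Order.TTheory GRing.Theory Num.Theory.
Local Open Scope ring_scope.

Lemma mac0 n : macmahon n 0 = 0%N.
Proof. by case: n => [|[|n]]. Qed.

Lemma mac1 n : macmahon n.+1 1 = 1%N.
Proof. by case: n. Qed.

Lemma macE n k : macmahon n.+2 k.+2 =
  if (k.+2 <= n.+2)%N then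
    ((2 * k.+2 - 1) * macmahon n.+1 k.+2 + (2 * n.+2 - 2 * k.+2 + 1) * macmahon n.+1 k.+1)%N
  else 0%N.
Proof. by []. Qed.

Lemma mac_big n k : (n < k)%N -> macmahon n k = 0%N.
Proof.
case: n => [//|[|n]]; first by case: k => [|[|]].
case: k => [|[|k]] H //. by rewrite macE leqNgt H.
Qed.

Lemma mac_rec n j : (j <= n.+1)%N ->
  macmahon n.+2 j.+1 = ((2 * j + 1) * macmahon n.+1 j.+1 + (2 * n + 3 - 2 * j) * macmahon n.+1 j)%N.
Proof.
case: j => [|j] H; first by rewrite mac0 !mac1; lia.
rewrite macE ifT; last by lia.
have -> : (2 * j.+2 - 1 = 2 * j.+1 + 1)%N by lia.
have -> : (2 * n.+2 - 2 * j.+2 + 1 = 2 * n + 3 - 2 * j.+1)%N by lia.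
by [].
Qed.

Lemma mac_diag n : macmahon n.+1 n.+1 = 1%N.
Proof.
elim: n => [//|n IH]. rewrite mac_rec // mac_big // IH. lia.
Qed.
Arguments macmahon : simpl never.

Lemma QpolyE (R : comNzRingType) (a b : R) n : Qpoly a b n =
  \sum_(j < n.+1) (macmahon n.+1 j.+1)%:R *: (('X - a%:P) ^+ (n - j) * ('X - b%:P) ^+ j).
Proof.
rewrite /Qpoly big_add1 big_mkord; apply: eq_bigr => j _.
by rewrite subSS subn1.
Qed.

Lemma XderivXn (R : comNzRingType) (a : R) p :
  ('X - a%:P) * (('X - a%:P) ^+ p)^`() = ('X - a%:P) ^+ p *+ p.
Proof.
rewrite deriv_exp derivXsubC mul1r; case: p => [|p]; first by rewrite !mulr0n mulr0.
by rewrite mulrnAr -exprS.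
Qed.

Lemma term_alg (T : comNzRingType) (A B dA dB P Q : T) (p q : nat) :
  A * dA = P *+ p -> B * dB = Q *+ q ->
  2 * (A * B) * (dA * Q + P * dB) + (A + B) * (P * Q) =
  (2 * q + 1)%:R * (A * P * Q) + (2 * p + 1)%:R * (P * (B * Q)).
Proof.
move=> H1 H2.
have -> : 2 * (A * B) * (dA * Q + P * dB) = 2 * B * Q * (A * dA) + 2 * A * P * (B * dB) by ring.
rewrite H1 H2; ring.
Qed.

Lemma term_rec (R : comNzRingType) (a b : R) p q :
  2 * (('X - a%:P) * ('X - b%:P)) * (('X - a%:P) ^+ p * ('X - b%:P) ^+ q)^`()
   + (('X - a%:P) + ('X - b%:P)) * (('X - a%:P) ^+ p * ('X - b%:P) ^+ q) =
  (2 * q + 1)%:R * (('X - a%:P) ^+ p.+1 * ('X - b%:P) ^+ q)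
   + (2 * p + 1)%:R * (('X - a%:P) ^+ p * ('X - b%:P) ^+ q.+1).
Proof.
rewrite derivM !exprS; apply: term_alg; exact: XderivXn.
Qed.

Lemma Qrec (R : comNzRingType) (a b : R) n :
  Qpoly a b n.+1 = 2 * (('X - a%:P) * ('X - b%:P)) * (Qpoly a b n)^`()
     + (('X - a%:P) + ('X - b%:P)) * Qpoly a b n.
Proof.
set A := 'X - a%:P; set B := 'X - b%:P; rewrite !QpolyE -/A -/B linear_sum /= mulr_sumr mulr_sumr -big_split /=.
have -> : \sum_(j < n.+2) (macmahon n.+2 j.+1)%:R *: (A ^+ (n.+1 - j) * B ^+ j) =
  \sum_(j < n.+2) ((2 * j + 1)%:R * (macmahon n.+1 j.+1)%:R *: (A ^+ (n.+1 - j) * B ^+ j)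
     + (2 * n + 3 - 2 * j)%:R * (macmahon n.+1 j)%:R *: (A ^+ (n.+1 - j) * B ^+ j)).
  apply: eq_bigr => j _; rewrite mac_rec; last by rewrite -ltnS.
  by rewrite natrD !natrM scalerDl.
rewrite big_split /= big_ord_recr /= (@mac_big n.+1 n.+2) // mulr0 scale0r addr0.
rewrite [\sum_(i < n.+2) _]big_ord_recl /= mac0 mulr0 scale0r add0r -big_split /=.
apply: eq_bigr => j _.
rewrite linearZ /= -scalerAr -scalerAr -scalerDr term_rec /=.
rewrite /bump /= add1n subSS subSn; last by rewrite -ltnS.
have -> : (2 * n + 3 - 2 * j.+1 = 2 * (n - j) + 1)%N.
  have := ltn_ord j; lia.
by rewrite scalerDr -!scalerA !scaler_nat !mulr_natl [in RHS]mulrnAC [X in _ + X = _]mulrnAC.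
Qed.

Definition conv (R : comNzRingType) (f g : nat -> R) n :=
  \sum_(k < n.+1) 'C(n, k)%:R * (f k * g (n - k)%N).
Arguments conv {R}.

Lemma conv_pascal (R : comNzRingType) (f g : nat -> R) n :
  conv f g n.+1 = conv (fun k => f k.+1) g n + conv f (fun k => g k.+1) n.
Proof.
rewrite /conv big_ord_recl /=.
under eq_bigr => i _ do rewrite /bump /= add1n binS natrD mulrDl subSS.
rewrite big_split /= addrA [RHS]addrC; congr (_ + _).
rewrite [RHS]big_ord_recl /= !bin0 subn0 big_ord_recr /= bin_small // mul0r addr0.
congr (_ + _); first by rewrite subn0.
apply: eq_bigr => i _; rewrite /bump /= add1n subnSK //.
Qed.

Lemma deriv_conv (R : comNzRingType) (f g : nat -> {poly R}) n :
  (conv f g n)^`() = conv (fun k => (f k)^`()) g n + conv f (fun k => (g k)^`()) n.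
Proof.
rewrite /conv linear_sum /= -big_split /=; apply: eq_bigr => i _.
by rewrite !mulr_natl derivMn derivM -mulrnDl.
Qed.

Definition ee (R : comNzRingType) (a b : R) (j : nat) : {poly R} :=
  (- (b - a)) ^+ j *: ('X - a%:P) - (b - a) ^+ j *: ('X - b%:P).
Arguments ee {R}.

Lemma ee_deriv (R : comNzRingType) (a b : R) j :
  (ee a b j)^`() = ((- (b - a)) ^+ j - (b - a) ^+ j)%:P.
Proof. by rewrite /ee derivB !derivZ !derivXsubC !alg_polyC -polyCB. Qed.

Lemma ee_rec (R : comNzRingType) (a b : R) j :
  ee a b j.+1 = 2 * (('X - a%:P) * ('X - b%:P)) * (ee a b j)^`()
     - (('X - a%:P) + ('X - b%:P)) * ee a b j.
Proof.
rewrite ee_deriv /ee !exprS -!mul_polyC !polyCB !polyCM !polyCN !polyCB.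
set x := ((- (b - a)) ^+ j)%:P; set y := ((b - a) ^+ j)%:P.
ring.
Qed.

Lemma Q0 (R : comNzRingType) (a b : R) : Qpoly a b 0 = 1.
Proof. by rewrite QpolyE big_ord1 mac1 scale1r !expr0 mulr1. Qed.

Lemma E_succ (R : comNzRingType) (a b : R) n :
  conv (Qpoly a b) (ee a b) n.+1 =
  2 * (('X - a%:P) * ('X - b%:P)) * (conv (Qpoly a b) (ee a b) n)^`().
Proof.
rewrite conv_pascal deriv_conv /conv mulrDr !mulr_sumr -!big_split /=.
apply: eq_bigr => i _.
rewrite Qrec ee_rec; ring.
Qed.

Lemma E_deriv (R : comNzRingType) (a b : R) n :
  (conv (Qpoly a b) (ee a b) n)^`() = 0.
Proof.
case: n => [|n].
  rewrite /conv big_ord1 Q0 mul1r /ee !expr0 !scale1r.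
  by rewrite mul1r derivB !derivXsubC subrr.
suff -> : conv (Qpoly a b) (ee a b) n.+1 = 0 by rewrite deriv0.
elim: n => [|n IH]; rewrite E_succ.
  rewrite /conv big_ord1 Q0 mul1r /ee !expr0 !scale1r.
  by rewrite mul1r derivB !derivXsubC subrr mulr0.
by rewrite IH deriv0 mulr0.
Qed.

Lemma WV (R : comNzRingType) (a b : R) n :
  conv (Qpoly a b) (fun j => (ee a b j)^`()) n.+1 =
  (conv (Qpoly a b) (fun j => ee a b j.+1) n)^`().
Proof.
rewrite conv_pascal deriv_conv; congr (_ + _).
apply/eqP; rewrite -subr_eq0; apply/eqP.
transitivity ((('X - a%:P) + ('X - b%:P)) * (conv (Qpoly a b) (ee a b) n)^`());
  last by rewrite E_deriv mulr0.
rewrite deriv_conv /conv mulrDr !mulr_sumr -sumrB -big_split /=.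
apply: eq_bigr => i _.
rewrite Qrec ee_rec; ring.
Qed.

Lemma coef_prim (R : fieldType) (p : {poly R}) i :
  (prim p)`_i = if i is j.+1 then p`_j / (j.+1)%:R else 0.
Proof.
rewrite /prim coef_poly; case: ifP => // /negbT; rewrite -leqNgt.
case: i => [//|j] H. by rewrite nth_default ?mul0r.
Qed.

Lemma primD (R : fieldType) (p q : {poly R}) : prim (p + q) = prim p + prim q.
Proof.
apply/polyP => i; rewrite coefD !coef_prim; case: i => [|j]; first by rewrite addr0.
by rewrite coefD mulrDl.
Qed.

Lemma primZ (R : fieldType) (c : R) (p : {poly R}) : prim (c *: p) = c *: prim p.
Proof.
apply/polyP => i; rewrite coefZ !coef_prim; case: i => [|j]; first by rewrite mulr0.
by rewrite coefZ mulrA.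
Qed.

Lemma prim0 (R : fieldType) : prim (0 : {poly R}) = 0.
Proof. by apply/polyP => i; rewrite coef_prim coef0; case: i => // j; rewrite coef0 mul0r. Qed.

Lemma pintD (R : fieldType) (p q : {poly R}) a b :
  poly_integral (p + q) a b = poly_integral p a b + poly_integral q a b.
Proof. rewrite /poly_integral primD !hornerD; ring. Qed.

Lemma pintZ (R : fieldType) (c : R) (p : {poly R}) a b :
  poly_integral (c *: p) a b = c * poly_integral p a b.
Proof. rewrite /poly_integral primZ !hornerZ; ring. Qed.

Lemma pint_sum (R : fieldType) (I : Type) (r : seq I) (F : I -> {poly R}) a b :
  poly_integral (\sum_(i <- r) F i) a b = \sum_(i <- r) poly_integral (F i) a b.
Proof.
apply: (big_morph (fun p => poly_integral p a b)) => [p q|]; first exact: pintD.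
by rewrite /poly_integral prim0 !horner0 subr0.
Qed.

Lemma pint_deriv (R : numFieldType) (q : {poly R}) a b :
  poly_integral q^`() a b = q.[b] - q.[a].
Proof.
rewrite /poly_integral.
have -> : prim q^`() = q - (q`_0)%:P.
  apply/polyP => i; rewrite coef_prim coefB coefC; case: i => [|j].
    by rewrite subrr.
  by rewrite coef_deriv subr0 -[q`_j.+1 *+ _]mulr_natr mulfK // pnatr_eq0.
rewrite !hornerE; ring.
Qed.

Lemma Q_at_b (R : comNzRingType) (a b : R) k : (Qpoly a b k).[b] = (b - a) ^+ k.
Proof.
rewrite QpolyE horner_sum big_ord_recl /= mac1 scale1r subn0 expr0 mulr1 hornerE.
rewrite hornerXsubC big1 ?addr0 // => j _.
by rewrite hornerZ hornerM !hornerE subrr expr0n /= mulr0.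
Qed.

Lemma Q_at_a (R : comNzRingType) (a b : R) k : (Qpoly a b k).[a] = (a - b) ^+ k.
Proof.
rewrite QpolyE horner_sum big_ord_recr /= mac_diag scale1r subnn expr0 mul1r hornerE.
rewrite hornerXsubC big1 ?add0r // => j _.
rewrite hornerZ hornerM !hornerE subrr expr0n /=.
by rewrite subn_eq0 leqNgt ltn_ord /= mulr0 mul0r.
Qed.

Definition II (R : fieldType) (a b : R) k := poly_integral (Qpoly a b k) a b.
Arguments II {R}.

Lemma conv_I_eps (R : numFieldType) (a b : R) m :
  conv (II a b) (fun j => (- (b - a)) ^+ j - (b - a) ^+ j) m
   = - 2 * (b - a) ^+ 2 * (m == 1%N)%:R.
Proof.
case: m => [|n].
  by rewrite /conv big_ord1 !expr0 subrr !mulr0.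
have -> : conv (II a b) (fun j => (- (b - a)) ^+ j - (b - a) ^+ j) n.+1
   = poly_integral (conv (Qpoly a b) (fun j => (ee a b j)^`()) n.+1) a b.
  rewrite /conv pint_sum; apply: eq_bigr => i _.
  rewrite ee_deriv.
  have -> : forall (k : nat) (e : R) (p : {poly R}), k%:R * (p * e%:P) = (k%:R * e) *: p.
    by move=> k e p; rewrite -mul_polyC polyCM polyC_natr; ring.
  by rewrite pintZ /II; ring.
rewrite WV pint_deriv /conv !horner_sum.
have Hb : \sum_(i < n.+1) ('C(n, i)%:R * (Qpoly a b i * ee a b (n - i)%N.+1)).[b]
   = - (b - a) ^+ 2 * (- (b - a) + (b - a)) ^+ n.
  rewrite [(_ + _) ^+ n]exprDn mulr_sumr; apply: eq_bigr => i _.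
  rewrite !hornerM -polyC_natr hornerC Q_at_b /ee !hornerE /= subrr mulr0 subr0 exprS -mulr_natl.
  set c := b - a. ring.
have Ha : \sum_(i < n.+1) ('C(n, i)%:R * (Qpoly a b i * ee a b (n - i)%N.+1)).[a]
   = (b - a) ^+ 2 * ((b - a) + - (b - a)) ^+ n.
  rewrite [(_ + _) ^+ n]exprDn mulr_sumr; apply: eq_bigr => i _.
  rewrite !hornerM -polyC_natr hornerC Q_at_a /ee !hornerE /= subrr mulr0 sub0r exprS -mulr_natl.
  have -> : a - b = - (b - a) by ring.
  set c := b - a. ring.
rewrite Hb Ha addNr subrr expr0n eqSS.
clear Ha Hb; case: n => [|n] /=; ring.
Qed.

Lemma size_bern (R : fieldType) (w : R) n : size (bern_seq w n) = n.+1.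
Proof. by elim: n => [//|n IH] /=; rewrite size_rcons IH. Qed.

Lemma nth_bern (R : fieldType) (w : R) n k : (k <= n)%N ->
  (bern_seq w n)`_k = bernoulli_poly k w.
Proof.
elim: n => [|n IH] H; first by move: H; rewrite leqn0 => /eqP ->.
rewrite leq_eqVlt in H; case/orP: H => [/eqP -> //|H].
rewrite /= nth_rcons size_bern H; exact: IH.
Qed.

Lemma bern_rec (R : fieldType) (w : R) n :
  bernoulli_poly n w = w ^+ n - \sum_(k < n) ('C(n.+1, k)%:R / (n.+1)%:R) * bernoulli_poly k w.
Proof.
case: n => [|n]; first by rewrite big_ord0 subr0 expr0.
rewrite /bernoulli_poly /= nth_rcons size_bern ltnn eqxx.
congr (_ - _); apply: eq_bigr => k _; rewrite nth_bern //.
by rewrite -ltnS.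
Qed.

Lemma bern_unique (R : numFieldType) (w : R) (beta : nat -> R) :
  (forall n, \sum_(k < n.+1) 'C(n.+1, k)%:R * beta k = (n.+1)%:R * w ^+ n) ->
  forall n, beta n = bernoulli_poly n w.
Proof.
move=> H n; elim/ltn_ind: n => n IH.
rewrite bern_rec.
have Hn : (n.+1)%:R != 0 :> R by rewrite pnatr_eq0.
have := H n; rewrite big_ord_recr /= binSn => E.
have -> : beta n = w ^+ n - \sum_(i < n) 'C(n.+1, i)%:R / (n.+1)%:R * beta i.
  apply: (mulfI Hn); rewrite mulrBr -E mulr_sumr.
  have -> : \sum_(i < n) (n.+1)%:R * ('C(n.+1, i)%:R / (n.+1)%:R * beta i)
        = \sum_(i < n) 'C(n.+1, i)%:R * beta i.
    apply: eq_bigr => i _; rewrite mulrA mulrCA mulfV // mulr1 //.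
  ring.
congr (_ - _); apply: eq_bigr => i _; rewrite IH //.
Qed.

Lemma conv_ext (R : comNzRingType) (f f' g g' : nat -> R) n :
  (forall k, (k <= n)%N -> f k = f' k) -> (forall k, (k <= n)%N -> g k = g' k) ->
  conv f g n = conv f' g' n.
Proof.
move=> Hf Hg; apply: eq_bigr => k _.
have Hk : (k <= n)%N by rewrite -ltnS.
by rewrite Hf // Hg // leq_subr.
Qed.

Lemma conv_comm (R : comNzRingType) (f g : nat -> R) n : conv f g n = conv g f n.
Proof.
rewrite /conv (reindex_inj rev_ord_inj) /=; apply: eq_bigr => k _.
have Hk : (k <= n)%N by rewrite -ltnS.
rewrite subKn // bin_sub //; ring.
Qed.

Definition egf (R : fieldType) (f : nat -> R) N : {poly R} := \poly_(i < N) (f i / (i`!)%:R).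
Arguments egf {R}.

Lemma conv_egf (R : numFieldType) (f g : nat -> R) n N : (n < N)%N ->
  conv f g n = (n`!)%:R * (egf f N * egf g N)`_n.
Proof.
move=> HnN; rewrite coefM mulr_sumr; apply: eq_bigr => j _.
have Hj : (j <= n)%N by rewrite -ltnS.
rewrite !coef_poly ifT; last exact: leq_ltn_trans HnN.
rewrite ifT; last exact: leq_ltn_trans (leq_subr _ _) HnN.
have Hb := bin_fact Hj.
have F1 : (j`!)%:R != 0 :> R by rewrite pnatr_eq0 -lt0n fact_gt0.
have F2 : ((n - j)`!)%:R != 0 :> R by rewrite pnatr_eq0 -lt0n fact_gt0.
have -> : (n`!)%:R = 'C(n, j)%:R * (j`!)%:R * ((n - j)`!)%:R :> R.
  by rewrite -Hb natrM natrM mulrA.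
field; by apply/andP.
Qed.

Lemma coefM_agree (R : nzRingType) (p p' q : {poly R}) n :
  (forall j, (j <= n)%N -> p`_j = p'`_j) -> (p * q)`_n = (p' * q)`_n.
Proof.
move=> H; rewrite !coefM; apply: eq_bigr => j _; by rewrite H // -ltnS.
Qed.

Lemma conv_assoc (R : numFieldType) (f g h : nat -> R) n :
  conv (conv f g) h n = conv f (conv g h) n.
Proof.
have Hn : (n < n.+1)%N by [].
rewrite (@conv_egf R _ _ _ _ Hn) (@conv_egf R _ _ _ _ Hn); congr (_ * _).
have E1 : forall (u v : nat -> R) j, (j <= n)%N ->
  (egf (conv u v) n.+1)`_j = (egf u n.+1 * egf v n.+1)`_j.
  move=> u v j Hj; rewrite coef_poly ifT ?ltnS // (@conv_egf R _ _ _ _ (Hj : (j < n.+1)%N)).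
  have F : (j`!)%:R != 0 :> R by rewrite pnatr_eq0 -lt0n fact_gt0.
  by rewrite mulrAC mulfV // mul1r.
rewrite (@coefM_agree _ _ _ _ _ (E1 f g)) [egf f _ * egf (conv g h) _]mulrC.
rewrite (@coefM_agree _ _ _ _ _ (E1 g h)).
by rewrite [egf g _ * egf h _ * _]mulrC mulrA.
Qed.

Lemma conv_exp (R : comNzRingType) (x y : R) n :
  conv (fun k => x ^+ k) (fun k => y ^+ k) n = (x + y) ^+ n.
Proof.
rewrite conv_comm exprDn; apply: eq_bigr => i _; rewrite mulr_natl; congr (_ *+ _).
by rewrite mulrC.
Qed.

Lemma conv_subl (R : comNzRingType) (f g h : nat -> R) n :
  conv (fun k => f k - g k) h n = conv f h n - conv g h n.
Proof. rewrite /conv -sumrB; apply: eq_bigr => i _; ring. Qed.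

Lemma conv_subr (R : comNzRingType) (f g h : nat -> R) n :
  conv h (fun k => f k - g k) n = conv h f n - conv h g n.
Proof. rewrite /conv -sumrB; apply: eq_bigr => i _; ring. Qed.

Lemma conv_scaler (R : comNzRingType) (s : R) (f g : nat -> R) n :
  conv f (fun k => s * g k) n = s * conv f g n.
Proof. rewrite /conv mulr_sumr; apply: eq_bigr => i _; ring. Qed.

Lemma conv_delta1 (R : comNzRingType) (f : nat -> R) n :
  conv f (fun k => (k == 1%N)%:R) n.+1 = (n.+1)%:R * f n.
Proof.
rewrite conv_comm /conv big_ord_recl big_ord_recl /= big1 => [|i _].
  by rewrite bin1 subSS !subn0 !mul0r !mulr0 mul1r add0r addr0.
by rewrite !mul0r mulr0.
Qed.

Theorem theorem5 (C : numClosedFieldType) (a b d : C) (n : nat) :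
  a != b -> (1 <= n)%N ->
  poly_integral (Spoly a b d n) a b
    = 2 ^+ n * (b - a) ^+ n.+1 * bernoulli_poly n (2^-1 + d / (b - a)).
Proof.
move=> hab _.
have hc : b - a != 0 by rewrite subr_eq0 eq_sym.
have h2 : (2 : C) != 0 by rewrite pnatr_eq0.
set c := b - a in hc *.
set I := II a b.
set K := fun m => conv (fun k => (2 * d) ^+ k) I m.
have HS : forall m, poly_integral (Spoly a b d m) a b = K m.
  move=> m; rewrite /Spoly pint_sum; apply: eq_bigr => k _; rewrite pintZ /I /II; ring.
have Heps : forall m, conv I (fun j => (- c) ^+ j - c ^+ j) m = - 2 * c ^+ 2 * (m == 1%N)%:R.
  by move=> m; rewrite /I /c conv_I_eps.
have HG : forall m, conv K (fun k => (2 * c) ^+ k) m - K m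
    = 2 * c ^+ 2 * conv (fun k => (c + 2 * d) ^+ k) (fun k => (k == 1%N)%:R) m.
  move=> m.
  have E1 : conv K (fun k => (2 * c) ^+ k) m = conv (fun k => (2 * c + 2 * d) ^+ k) I m.
    rewrite conv_comm /K -conv_assoc; apply: conv_ext => // k _.
    by rewrite conv_exp.
  have E2 : forall k, (2 * c + 2 * d) ^+ k - (2 * d) ^+ k
      = -1 * conv (fun j => (c + 2 * d) ^+ j) (fun j => (- c) ^+ j - c ^+ j) k.
    move=> k; rewrite conv_subr !conv_exp.
    have -> : c + 2 * d + - c = 2 * d by ring.
    have -> : c + 2 * d + c = 2 * c + 2 * d by ring.
    ring.
  rewrite E1 /K -conv_subl.
  set X := fun k => conv (fun j => (c + 2 * d) ^+ j) (fun j => (- c) ^+ j - c ^+ j) k.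
  have E3 : conv (fun k => (2 * c + 2 * d) ^+ k - (2 * d) ^+ k) I m
      = conv (fun k => -1 * X k) I m.
    by apply: conv_ext => k _; rewrite ?E2.
  rewrite E3 conv_comm conv_scaler conv_comm /X conv_assoc.
  have E4 : conv (fun k => (c + 2 * d) ^+ k) (conv (fun j => (- c) ^+ j - c ^+ j) I) m
     = conv (fun k => (c + 2 * d) ^+ k) (fun k => - 2 * c ^+ 2 * (k == 1%N)%:R) m.
    by apply: conv_ext => k _ //; rewrite conv_comm Heps.
  rewrite E4 conv_scaler; ring.
set beta := fun k => K k / ((2 * c) ^+ k * c).
have Hsc : forall m, \sum_(k < m.+1) 'C(m, k)%:R * beta k * ((2 * c) ^+ m * c)
    = conv K (fun k => (2 * c) ^+ k) m.
  move=> m; apply: eq_bigr => k _.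
  have Hk : (k <= m)%N by rewrite -ltnS.
  have -> : (2 * c) ^+ m = (2 * c) ^+ k * (2 * c) ^+ (m - k)%N by rewrite -exprD subnKC.
  have h2c : (2 * c) ^+ k != 0 by rewrite expf_neq0 // mulf_neq0.
  rewrite /beta; field; by rewrite h2c hc.
have Hrec : forall m, \sum_(k < m.+1) 'C(m.+1, k)%:R * beta k
    = (m.+1)%:R * (2^-1 + d / c) ^+ m.
  move=> m.
  have Hnz : (2 * c) ^+ m.+1 * c != 0 by rewrite mulf_neq0 // expf_neq0 // mulf_neq0.
  apply: (mulIf Hnz).
  rewrite mulr_suml.
  have := Hsc m.+1; rewrite big_ord_recr /= binn mulr1n mul1r => H.
  have -> : \sum_(i < m.+1) 'C(m.+1, i)%:R * beta i * ((2 * c) ^+ m.+1 * c)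
      = conv K (fun k => (2 * c) ^+ k) m.+1 - K m.+1.
    rewrite -H /beta mulfVK //; ring.
  rewrite HG conv_delta1.
  have -> : 2^-1 + d / c = (c + 2 * d) / (2 * c) by field; rewrite hc.
  rewrite expr_div_n !exprS; field.
  by rewrite expf_neq0 // mulf_neq0.
have Hb := @bern_unique C _ beta Hrec n.
rewrite HS /c -Hb /beta -/c exprMn exprS.
have h2n : (2 : C) ^+ n != 0 by rewrite expf_neq0.
have hcn : c ^+ n != 0 by rewrite expf_neq0.
set Kn := K n; set u := (2 : C) ^+ n; set v := c ^+ n.
field; by rewrite hc h2n hcn.
Qed.
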